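(* Assume the standing assumptions below. There exist a constant $\epsilon_b>0$ and a conditional distribution $\bar\pi_{o,b}(o_t,b_t\mid s_t;\theta)$ (for each $s_t\in\mathcal S$ and $\theta\in\Theta$ a probability mass function on $\mathcal O\times\{0,1\}$) such that for all $\theta\in\Theta$ and all $b_t\in\{0,1\}$, $s_t\in\mathcal S$, $o_{t-1},o_t\in\mathcal O$, $$0<\epsilon_b\zeta\,\bar\pi_{o,b}(o_t,b_t\mid s_t;\theta)\le\pi_b(b_t\mid s_t,o_{t-1};\theta_b)\,\bar\pi_{hi}(o_t\mid s_t,o_{t-1},b_t;\theta_{hi})\le\epsilon_b^{-1}|\mathcal O|\,\bar\pi_{o,b}(o_t,b_t\mid s_t;\theta).$$
   Context: $\mathcal S,\mathcal O$ are finite sets; $\Theta=\Theta_{hi}\times\Theta_{lo}\times\Theta_b$ is a convex compact subset of a Euclidean space, $\theta=(\theta_{hi},\theta_{lo},\theta_b)$. $\pi_{hi}(o\mid s;\theta_{hi})$ is a distribution on $\mathcal O$ and $\pi_b(b\mid s,o';\theta_b)$ a distribution on $\{0,1\}$. For a fixed $\zeta\in(0,1)$, $\bar\pi_{hi}(o_t\mid s_t,o_{t-1},b_t;\theta_{hi})$ equals $\pi_{hi}(o_t\mid s_t;\theta_{hi})$ if $b_t=1$, $1-\zeta+\zeta/|\mathcal O|$ if $b_t=0,o_t=o_{t-1}$, and $\zeta/|\mathcal O|$ if $b_t=0,o_t\ne o_{t-1}$. Standing assumptions: there is an open $\tilde\Theta\supseteq\Theta$ on which $\pi_{hi}$ and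 $\pi_b$ (and the low-level policy) are defined, strictly positive, and continuously differentiable in $\theta$ for all other arguments. *)

(* Defs.v *)
From HB Require Import structures.
From mathcomp Require Import all_boot all_order all_algebra.
From mathcomp Require Import all_classical all_reals all_analysis.
Set Implicit Arguments. Unset Strict Implicit. Unset Printing Implicit Defensive.
Import Order.TTheory GRing.Theory Num.Theory.
Import numFieldNormedType.Exports.
Local Open Scope classical_set_scope.
Local Open Scope ring_scope.

(* Parameter space: theta = (theta_hi, theta_lo, theta_b) in
   R^nh x R^nl x R^nb, represented as ('rV_nh * 'rV_nl) * 'rV_nb. *)
Definition param (R : realType) (nh nl nb : nat) :=
  ('rV[R]_nh * 'rV[R]_nl * 'rV[R]_nb)%type.

Definition prod3 (R : realType) (nh nl nb : nat)
  (Th : set 'rV[R]_nh) (Tl : set 'rV[R]_nl) (Tb : set 'rV[R]_nb)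
  : set (param R nh nl nb) :=
  [set th | Th th.1.1 /\ Tl th.1.2 /\ Tb th.2].

Definition pconv (R : realType) (nh nl nb : nat) (t : R)
  (x y : param R nh nl nb) : param R nh nl nb :=
  ((t *: x.1.1 + (1 - t) *: y.1.1, t *: x.1.2 + (1 - t) *: y.1.2),
    t *: x.2 + (1 - t) *: y.2).

Definition convex_set3 (R : realType) (nh nl nb : nat)
  (A : set (param R nh nl nb)) : Prop :=
  forall x y t, A x -> A y -> 0 <= t <= 1 -> A (pconv t x y).

Definition C1_on (R : realType) (n : nat) (U : set 'rV[R]_n)
  (f : 'rV[R]_n -> R) : Prop :=
  (forall x, U x -> differentiable f x) /\
  (forall v : 'rV[R]_n, {in U, continuous (fun x => 'D_v f x)}).

Definition is_pmf (R : realType) (T : finType) (p : T -> R) : Prop :=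
  (forall x, 0 <= p x) /\ \sum_(x : T) p x = 1.

Definition pi_hi_bar (R : realType) (S O : finType) (nh : nat)
  (zeta : R) (pi_hi : S -> 'rV[R]_nh -> O -> R)
  (s : S) (o_prev : O) (b : bool) (thh : 'rV[R]_nh) (o : O) : R :=
  if b then pi_hi s thh o
  else if o == o_prev then 1 - zeta + zeta / #|O|%:R
  else zeta / #|O|%:R.

(* Main.v *)
Require Import Defs.
From HB Require Import structures.
From mathcomp Require Import all_boot all_order all_algebra.
From mathcomp Require Import all_classical all_reals all_analysis.
From mathcomp Require Import lra.
Import Order.TTheory GRing.Theory Num.Theory.
Import numFieldNormedType.Exports.
Local Open Scope classical_set_scope.
Local Open Scope ring_scope.

Lemma lb_pos {T : topologicalType} {R : realType} {f : T -> R} {A : set T} :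
  compact A -> {in A, continuous f} -> (forall x, A x -> 0 < f x) ->
  exists c : R, 0 < c /\ forall x, A x -> c <= f x.
Proof.
move=> cA cf fpos.
have [->|A0] := eqVneq A set0; first by exists 1; split => // x.
have A0' : A !=set0 by apply/set0P.
have [c cA' minf] := compact_EVT_min A0' cA (continuous_in_subspaceT cf).
exists (f c); split; first by apply: fpos; rewrite -inE.
by move=> x Ax; apply: minf; rewrite inE.
Qed.

Lemma cont_snd_comp {R : realType} {nh nl nb : nat} {Ub : set 'rV[R]_nb}
  {g : 'rV[R]_nb -> R} {th : param R nh nl nb} :
  C1_on Ub g -> Ub th.2 -> {for th, continuous (fun x : param R nh nl nb => g x.2)}.
Proof.
move=> [dg _] Uth.
apply: (@continuous_comp _ _ _ snd g th).
  exact: cvg_snd.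
exact: differentiable_continuous (dg _ Uth).
Qed.

Lemma pmf_bool_le1 (R : realType) (p : bool -> R) (b : bool) : is_pmf p -> p b <= 1.
Proof.
move=> [p0 ps]; move: ps; rewrite big_bool => <-.
by case: b; [rewrite lerDl | rewrite lerDr].
Qed.

Lemma cardO_gt0 (O : finType) (o : O) : (0 < #|O|)%N.
Proof. by apply/card_gt0P; exists o. Qed.

Theorem lemma7 (R : realType) (S O : finType) (nh nl nb : nat)
  (Th : set 'rV[R]_nh) (Tl : set 'rV[R]_nl) (Tb : set 'rV[R]_nb)
  (Uh : set 'rV[R]_nh) (Ub : set 'rV[R]_nb)
  (pi_hi : S -> 'rV[R]_nh -> O -> R)
  (pi_b : S -> O -> 'rV[R]_nb -> bool -> R)
  (zeta : R) :
  compact (prod3 Th Tl Tb) ->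
  convex_set3 (prod3 Th Tl Tb) ->
  open Uh -> Th `<=` Uh ->
  open Ub -> Tb `<=` Ub ->
  (forall s th, Uh th -> is_pmf (pi_hi s th)) ->
  (forall s o th, Ub th -> is_pmf (pi_b s o th)) ->
  (forall s th o, Uh th -> 0 < pi_hi s th o) ->
  (forall s o th b, Ub th -> 0 < pi_b s o th b) ->
  (forall s o, C1_on Uh (fun th => pi_hi s th o)) ->
  (forall s o b, C1_on Ub (fun th => pi_b s o th b)) ->
  0 < zeta < 1 ->
  exists eps_b : R, 0 < eps_b /\
  exists pi_ob : S -> param R nh nl nb -> O * bool -> R,
    (forall s th, prod3 Th Tl Tb th -> is_pmf (pi_ob s th)) /\
    (forall th, prod3 Th Tl Tb th ->
      forall (b : bool) (s : S) (o_prev o : O),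
        0 < eps_b * zeta * pi_ob s th (o, b) /\
        eps_b * zeta * pi_ob s th (o, b) <=
          pi_b s o_prev th.2 b * pi_hi_bar zeta pi_hi s o_prev b th.1.1 o /\
        pi_b s o_prev th.2 b * pi_hi_bar zeta pi_hi s o_prev b th.1.1 o <=
          eps_b^-1 * #|O|%:R * pi_ob s th (o, b)).
Proof.
move=> cK _ _ ThU _ TbU pmf_hi pmf_b hipos bpos _ C1b /andP[z0 z1].
have : forall i : S * O * bool, exists c : R, 0 < c /\
    forall th, prod3 Th Tl Tb th -> c <= pi_b i.1.1 i.1.2 th.2 i.2.
  move=> [[s o] b]; apply: lb_pos => //.
  - move=> th; rewrite inE => -[_ [_ Hb]].
    exact: (cont_snd_comp (C1b s o b) (TbU _ Hb)).
  - by move=> th [_ [_ Hb]]; apply: bpos; exact: TbU.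
move=> /choice [c hc].
set eps := (2 + \sum_i (c i)^-1)^-1.
have sum0 : 0 <= \sum_i (c i)^-1.
  by apply: sumr_ge0 => i _; rewrite invr_ge0 ltW // (hc i).1.
have eps0 : 0 < eps by rewrite invr_gt0; lra.
have epsE : eps^-1 = 2 + \sum_i (c i)^-1 by rewrite invrK.
have epsc : forall i, eps <= c i.
  move=> i; have ci := (hc i).1.
  rewrite /eps -[c i]invrK lef_pV2 ?posrE ?invr_gt0 //; last by lra.
  rewrite (bigD1 i) //= addrCA lerDl.
  by apply: addr_ge0 => //; apply: sumr_ge0 => j _; rewrite invr_ge0 ltW // (hc j).1.
exists eps; split => //.
exists (fun s th ob => (if ob.2 then pi_hi s th.1.1 ob.1 else #|O|%:R^-1) / 2).
split.
  move=> s th [Hh _].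
  have [p0 ps] := pmf_hi s _ (ThU _ Hh).
  split.
    by move=> x; case: x => x bb; case: bb; rewrite /= divr_ge0.
  case: (pickP (fun _ : O => true)) => [y _|h]; last first.
    by move: ps; rewrite big_pred0 // => /eqP; rewrite eq_sym oner_eq0.
  rewrite -(pair_big xpredT xpredT (fun x (b:bool) => (if b then pi_hi s th.1.1 x else #|O|%:R^-1) / 2)) /=.
  under eq_bigr => x _ do rewrite big_bool /=.
  rewrite big_split /= -!mulr_suml ps sumr_const.
  have n1 : 1 <= #|O|%:R :> R by rewrite ler1n; exact: cardO_gt0 y.
  rewrite eq_cardT // -cardT.
  rewrite -[_ *+ #|O|]mulr_natr mulVf; last by rewrite gt_eqF // (lt_le_trans ltr01).
  lra.
move=> th [Hh [Hl Hb]] b s o_prev o.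
have n1 : 1 <= #|O|%:R :> R by rewrite ler1n; exact: cardO_gt0 o.
have nu : #|O|%:R * (#|O|%:R)^-1 = 1 :> R by rewrite mulfV // gt_eqF // (lt_le_trans ltr01).
have u0 : 0 < (#|O|%:R)^-1 :> R by rewrite invr_gt0 (lt_le_trans ltr01).
move: nu u0 n1.
set n := (#|O|%:R : R) => nu u0 n1.
have pbl : eps <= pi_b s o_prev th.2 b.
  apply: le_trans (epsc (s, o_prev, b)) _.
  exact: ((hc (s, o_prev, b)).2 th (conj Hh (conj Hl Hb))).
have pbu : pi_b s o_prev th.2 b <= 1 by apply: pmf_bool_le1; apply: pmf_b; exact: TbU.
have E2 : 2 <= eps^-1 by rewrite epsE lerDl.
have eE : eps * eps^-1 = 1 by rewrite mulfV // gt_eqF.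
move: E2 eE pbl pbu; set E := eps^-1; set pb := pi_b s o_prev th.2 b => E2 eE pbl pbu.
rewrite /pi_hi_bar; case: b pb pbl pbu => pb pbl pbu /=.
  have ph0 := hipos s th.1.1 o (ThU _ Hh).
  set ph := pi_hi s th.1.1 o in ph0 *.
  split; first by rewrite !mulr_gt0.
  have En : 2 <= E * n by nra.
  split.
    apply: (@le_trans _ _ (eps * ph)).
      rewrite -mulrA ler_pM2l //; nra.
    by rewrite ler_pM2r.
  apply: (@le_trans _ _ ph); first nra.
  nra.
rewrite -/n.
set u := n^-1 in nu u0 *.
have bl : zeta * u <= (if o == o_prev then 1 - zeta + zeta * u else zeta * u).
  by case: ifP => _; nra.
have bu : (if o == o_prev then 1 - zeta + zeta * u else zeta * u) <= 1.
  by case: ifP => _; nra.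
move: bl bu; set bar := (if _ then _ else _) => bl bu.
have bar0 : 0 < bar by apply: lt_le_trans bl; rewrite mulr_gt0.
split; first by rewrite !mulr_gt0 // invr_gt0.
split.
  apply: (@le_trans _ _ (eps * (zeta * u))).
    rewrite -mulrA ler_pM2l //; nra.
  by apply: ler_pM => //; [exact: ltW | rewrite mulr_ge0 // ltW].
apply: (@le_trans _ _ 1); first nra.
rewrite -!mulrA (mulrA n) nu mul1r; lra.
Qed.
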